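(* Let $Y$ be a totally ordered set. The Lyndon monomials $P_w$, for $w$ ranging over Lyndon words in $Y$ without repetition (no letter occurring twice), form a $\mathbb Z$-basis of $R\mathfrak L[Y]$. Consequently, for $|Y|=n$, the degree-$k$ part $R\mathfrak L[n]_k$ is free abelian of rank $(k-1)!\binom{n}{k}$.
   Context: $R\mathfrak L[Y]$ is the Lie ring generated by $Y$ subject to $[y_1,[y_2,[\cdots[y_{s-1},y_s]\cdots]]]=0$ for every $s\geq2$ and every $(y_1,\dots,y_s)\in Y^s$ with $y_i=y_j$ for some $i\neq j$; it is graded by bracket length. Words in $Y$ are ordered lexicographically (dictionary order). A Lyndon word is a nonempty word strictly smaller than each of its proper nonempty suffixes. The standard factorization of a word $w$ of length $\geq2$ is $w=uv$ where $v$ is its smallest proper suffix. Lyndon monomials are defined inductively: $P_y=y$ for a letter $y$, and $P_w=[P_u,P_v]$ if $w=uv$ is the standard factorization of the Lyndon word $w$ (here $P_w$ is viewed in $R\mathfrak L[Y]$). *)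

(* Defs.v *)
From HB Require Import structures.
From mathcomp Require Import all_boot all_order all_algebra.
Set Implicit Arguments. Unset Strict Implicit. Unset Printing Implicit Defensive.
Import Order.TTheory GRing.Theory Num.Theory.
Local Open Scope ring_scope.

Record is_lie_ring (L : zmodType) (br : L -> L -> L) : Prop := {
  br_addl : forall x y z, br (x + y) z = br x z + br y z;
  br_addr : forall x y z, br x (y + z) = br x y + br x z;
  br_alt : forall x, br x x = 0;
  br_jacobi : forall x y z, br x (br y z) + br y (br z x) + br z (br x y) = 0 }.

Definition is_lie_hom (L M : zmodType) (brL : L -> L -> L) (brM : M -> M -> M)
  (g : L -> M) : Prop :=
  (forall x y, g (x + y) = g x + g y) /\ (forall x y, g (brL x y) = brM (g x) (g y)).

Fixpoint rnbr (Y : Type) (L : zmodType) (br : L -> L -> L) (i : Y -> L)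
  (s : seq Y) : L :=
  match s with
  | [::] => 0
  | [:: y] => i y
  | y :: s' => br (i y) (rnbr br i s')
  end.

Definition RL_relations (Y : eqType) (L : zmodType) (br : L -> L -> L)
  (i : Y -> L) : Prop :=
  forall s : seq Y, (2 <= size s)%N -> ~~ uniq s -> rnbr br i s = 0.

(* (L, br, i) is a presentation of R L[Y]: the Lie ring generated by Y subject
   to the relations above, i.e. the initial object among Lie rings with a map
   from Y satisfying the relations. *)
Definition is_RL (Y : eqType) (L : zmodType) (br : L -> L -> L) (i : Y -> L) : Prop :=
  is_lie_ring br /\ RL_relations br i /\
  forall (M : zmodType) (brM : M -> M -> M) (f : Y -> M),
    is_lie_ring brM -> RL_relations brM f ->
    exists! g : L -> M, is_lie_hom br brM g /\ forall y, g (i y) = f y.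

Inductive btree (Y : Type) : Type :=
  | BLeaf of Y
  | BNode of btree Y & btree Y.

Fixpoint bt_eval (Y : Type) (L : zmodType) (br : L -> L -> L) (i : Y -> L)
  (t : btree Y) : L :=
  match t with
  | BLeaf y => i y
  | BNode t1 t2 => br (bt_eval br i t1) (bt_eval br i t2)
  end.

Fixpoint bt_len (Y : Type) (t : btree Y) : nat :=
  match t with
  | BLeaf _ => 1
  | BNode t1 t2 => bt_len t1 + bt_len t2
  end.

Definition deg_part (Y : Type) (L : zmodType) (br : L -> L -> L) (i : Y -> L)
  (k : nat) (x : L) : Prop :=
  exists s : seq (int * btree Y),
    all (fun p => bt_len p.2 == k) s /\ x = \sum_(p <- s) (bt_eval br i p.2) *~ p.1.

Definition Zindep (I : eqType) (L : zmodType) (b : I -> L) (A : pred I) : Prop :=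
  forall (s : seq I) (c : I -> int), uniq s -> all A s ->
    \sum_(j <- s) b j *~ c j = 0 -> forall j, j \in s -> c j = 0.

Definition Zspans (I : eqType) (L : zmodType) (b : I -> L) (A : pred I)
  (S : L -> Prop) : Prop :=
  forall x, S x <-> exists (s : seq I) (c : I -> int),
    all A s /\ x = \sum_(j <- s) b j *~ c j.

Definition is_Zbasis (I : eqType) (L : zmodType) (b : I -> L) (A : pred I)
  (S : L -> Prop) : Prop := Zindep b A /\ Zspans b A S.

Definition free_of_rank (L : zmodType) (S : L -> Prop) (r : nat) : Prop :=
  exists b : 'I_r -> L, is_Zbasis b predT S.

Section Words.
Context {d : Order.disp_t} {Y : orderType d}.

Fixpoint lexlt (s t : seq Y) : bool :=
  match s, t with
  | [::], [::] => false
  | [::], _ :: _ => true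
  | _ :: _, [::] => false
  | x :: s', y :: t' => ((x < y)%O) || ((x == y) && lexlt s' t')
  end.

Definition lyndon (w : seq Y) : bool :=
  (w != [::]) && all (fun j => lexlt w (drop j w)) (iota 1 (size w).-1).

(* smallest proper nonempty suffix (for size w >= 2) *)
Definition min_suffix (w : seq Y) : seq Y :=
  foldl (fun m s => if lexlt s m then s else m) (drop 1 w)
        [seq drop j w | j <- iota 2 (size w - 2)].

Fixpoint lyndon_mon_rec (L : zmodType) (br : L -> L -> L) (i : Y -> L)
  (n : nat) (w : seq Y) : L :=
  match n with
  | 0 => 0
  | n'.+1 =>
    match w with
    | [:: y] => i y
    | _ => let v := min_suffix w in
           br (lyndon_mon_rec br i n' (take (size w - size v) w))
              (lyndon_mon_rec br i n' v)
    end
  end.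

(* P_w, with the standard factorization w = uv, v the smallest proper suffix *)
Definition lyndon_mon (L : zmodType) (br : L -> L -> L) (i : Y -> L)
  (w : seq Y) : L := lyndon_mon_rec br i (size w) w.

End Words.

(* Main.v *)
Require Import Defs.
From HB Require Import structures.
From mathcomp Require Import all_boot all_order all_algebra.
From mathcomp Require Import boolp functions zify.
Import Order.TTheory GRing.Theory Num.Theory.
Local Open Scope ring_scope.
Set Implicit Arguments. Unset Strict Implicit. Unset Printing Implicit Defensive.

Section Words1.
Context {d : Order.disp_t} {Y : orderType d}.
Implicit Types (s t u v w x : seq Y).

Lemma lexlt_irr s : ~~ lexlt s s.
Proof. by elim: s => //= a s IH; rewrite ltxx eqxx. Qed.

Lemma lexlt_trans s t u : lexlt s t -> lexlt t u -> lexlt s u.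
Proof.
elim: s t u => [|a s IH] [|b t] [|c u] //=.
move=> /orP[ab|/andP[/eqP ab st]] /orP[bc|/andP[/eqP bc tu]].
- by rewrite (lt_trans ab bc).
- by rewrite -bc ab.
- by rewrite ab bc.
- by rewrite ab bc eqxx (IH _ _ st tu) orbT.
Qed.

Lemma lexlt_total s t : s != t -> lexlt s t || lexlt t s.
Proof.
elim: s t => [|a s IH] [|b t] //=.
rewrite eqseq_cons; case: (ltgtP a b) => //= ab; subst b. idtac.
by move=> /IH.
Qed.

Definition lexle s t := (s == t) || lexlt s t.

Lemma lexle_trans s t u : lexle s t -> lexle t u -> lexle s u.
Proof.
rewrite /lexle => /orP[/eqP->//|st] /orP[/eqP<-|tu]; first by rewrite st orbT.
by rewrite (lexlt_trans st tu) orbT.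
Qed.

Lemma lexle_lt_trans s t u : lexle s t -> lexlt t u -> lexlt s u.
Proof. by rewrite /lexle => /orP[/eqP->//|st] tu; apply: lexlt_trans st tu. Qed.

Lemma lexlt_le_trans s t u : lexlt s t -> lexle t u -> lexlt s u.
Proof. by rewrite /lexle => st /orP[/eqP<-//|tu]; apply: lexlt_trans st tu. Qed.

Lemma lexle_total s t : ~~ lexlt s t -> lexle t s.
Proof.
rewrite /lexle; case: (eqVneq t s) => //= ts st.
by move: (lexlt_total ts); rewrite (negbTE st) orbF.
Qed.

Lemma lexle_irr s t : lexle s t -> lexlt t s -> False.
Proof.
by rewrite /lexle => /orP[/eqP->|st ts]; [rewrite (negbTE (lexlt_irr _))|
  move: (lexlt_trans st ts); rewrite (negbTE (lexlt_irr _))].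
Qed.

Lemma lexlt_cat u v x y : size u = size x -> lexlt u x -> lexlt (u ++ v) (x ++ y).
Proof.
elim: u x => [|a u IH] [|b x] //= [sz] /orP[->//|/andP[-> ux]].
by rewrite (IH _ sz ux) orbT.
Qed.

Lemma lexlt_catl u v y : lexlt v y -> lexlt (u ++ v) (u ++ y).
Proof. by elim: u => //= a u IH vy; rewrite eqxx IH ?orbT. Qed.

Lemma lexle_cat u v x y : size u = size x -> lexle u x -> lexle v y ->
  lexle (u ++ v) (x ++ y).
Proof.
rewrite /lexle => sz /orP[/eqP->|ux] /orP[/eqP->|vy].
- by rewrite eqxx.
- by rewrite lexlt_catl ?orbT.
- by rewrite lexlt_cat ?orbT.
- by rewrite lexlt_cat ?orbT.
Qed.

Lemma lexle_head a b s t : lexle (a :: s) (b :: t) -> (a <= b)%O.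
Proof.
rewrite /lexle /= eqseq_cons => /orP[/andP[/eqP-> _]//|/orP[/ltW//|/andP[/eqP-> _]//]].
Qed.

Lemma lyndon_uniq (a : Y) (r : seq Y) :
  uniq (a :: r) -> lyndon (a :: r) = all (fun y => (a < y)%O) r.
Proof.
move=> U; rewrite /lyndon.
have -> : (a :: r != [::]) = true by [].
have -> : (size (a :: r)).-1 = size r by [].
have anr : a \notin r by case/andP: U.
have key j : (j < size r)%N -> lexlt (a :: r) (drop j.+1 (a :: r)) = (a < nth a r j)%O.
  move=> jr; rewrite drop_cons (drop_nth a jr).
  have e : (a == nth a r j) = false.
    apply/negbTE; apply: contraNneq anr => ->; exact: mem_nth.
  by rewrite /= e andFb orbF.
rewrite andTb; apply/allP/allP.
- move=> H y yr; have := H (index y r).+1.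
  rewrite mem_iota ltn0Sn add1n ltnS index_mem yr => /(_ isT).
  by rewrite key ?index_mem // nth_index.
- move=> H j; rewrite mem_iota add1n => /andP[j1 jr].
  case: j j1 jr => // j _; rewrite ltnS => jr.
  by rewrite key // H // mem_nth.
Qed.

Lemma foldl_min (l : seq (seq Y)) (m0 : seq Y) :
  let r := foldl (fun m s => if lexlt s m then s else m) m0 l in
  r \in m0 :: l /\ forall c, c \in m0 :: l -> lexle r c.
Proof.
elim: l m0 => [|c l IH] m0 /=.
  by split; [rewrite mem_seq1|move=> c; rewrite mem_seq1 => /eqP->; rewrite /lexle eqxx].
case: ifP => cm0.
- have [H1 H2] := IH c; split.
    by move: H1; rewrite !inE => /orP[->|->]; rewrite ?orbT.
  move=> c'; rewrite !inE => /orP[/eqP->|cl].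
    apply: lexle_trans (H2 c _) _; first by rewrite inE eqxx.
    by rewrite /lexle cm0 orbT.
  by apply: H2; rewrite inE.
- have [H1 H2] := IH m0; split.
    by move: H1; rewrite !inE => /orP[->|->]; rewrite ?orbT.
  move=> c'; rewrite !inE => /orP[/eqP->|/orP[/eqP->|cl]].
  + by apply: H2; rewrite inE eqxx.
  + apply: lexle_trans (H2 m0 _) _; first by rewrite inE eqxx.
    by apply: lexle_total; rewrite cm0.
  + by apply: H2; rewrite inE cl orbT.
Qed.

Lemma min_suffixP w : (2 <= size w)%N ->
  exists j, [/\ (0 < j < size w)%N, min_suffix w = drop j w &
    forall j', (0 < j' < size w)%N -> lexle (drop j w) (drop j' w)].
Proof.
move=> w2; rewrite /min_suffix.
have [H1 H2] := foldl_min [seq drop j w | j <- iota 2 (size w - 2)] (drop 1 w).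
set r := foldl _ _ _ in H1 H2 *.
have cand : forall j', (0 < j' < size w)%N -> drop j' w \in drop 1 w :: [seq drop j w | j <- iota 2 (size w - 2)].
  move=> j' /andP[j0 jw]; rewrite inE; case: j' j0 jw => // [[|j']] _ jw.
    by rewrite eqxx.
  apply/orP; right; apply/mapP; exists j'.+2 => //.
  rewrite mem_iota; move: jw w2; clear; lia.
move: H1; rewrite inE => /orP[/eqP rE|/mapP[j]].
  exists 1%N; rewrite -rE; split; [by move: w2; clear; lia|by []|].
  by move=> j' /cand /H2.
rewrite mem_iota => /andP[j2 jw] rE; exists j; rewrite -rE; split; [|by []|].
  by move: j2 jw w2; clear; lia.
by move=> j' /cand /H2.
Qed.

Lemma std_fact (w : seq Y) : uniq w -> lyndon w -> (2 <= size w)%N ->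
  [/\ w = take (size w - size (min_suffix w)) w ++ min_suffix w,
      lyndon (take (size w - size (min_suffix w)) w) &&
        uniq (take (size w - size (min_suffix w)) w),
      lyndon (min_suffix w) && uniq (min_suffix w) &
      exists a u', take (size w - size (min_suffix w)) w = a :: u' /\
        all (fun y => (a < y)%O) (min_suffix w)].
Proof.
move=> Uw Lw w2.
have [j [/andP[j0 jw] vE jmin]] := min_suffixP w2.
rewrite vE size_drop subKn ?(ltnW jw) //.
case: w Uw Lw w2 jw vE jmin => // a r Uw Lw w2 jw vE jmin.
have Ar : all (fun y => (a < y)%O) r by rewrite -lyndon_uniq.
have anr : a \notin r by case/andP: Uw.
have Uv : uniq (drop j (a :: r)) by rewrite drop_uniq.
have vsub : forall y, y \in drop j (a :: r) -> y \in r.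
  by move=> y; case: j j0 {jw jmin vE Uv} => // j _ /=; apply: mem_drop.
split.
- by rewrite cat_take_drop.
- rewrite take_uniq // andbT; case: j j0 {jw jmin vE vsub Uv} => // j _ /=.
  rewrite lyndon_uniq; first by apply/allP => y /mem_take yr; apply: (allP Ar).
  exact: (take_uniq j.+1 Uw).
- rewrite Uv andbT (drop_nth a jw) lyndon_uniq -?(drop_nth a jw) //.
  apply/allP => y yv.
  have nU : nth a (a :: r) j \notin drop j.+1 (a :: r).
    by move: Uv; rewrite (drop_nth a jw) => /andP[].
  set q := index y (drop j.+1 (a :: r)).
  have qlt : (q < size (drop j.+1 (a :: r)))%N by rewrite index_mem.
  have yE : y = nth a (a :: r) (j.+1 + q) by rewrite -nth_drop nth_index.
  have pw : (j.+1 + q < size (a :: r))%N by move: qlt; rewrite size_drop; lia.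
  have := jmin (j.+1 + q); rewrite pw andbT => /(_ isT).
  rewrite (drop_nth a jw) (drop_nth a pw) -yE => /lexle_head le.
  rewrite lt_neqAle le andbT; apply: contraNneq nU => ->; exact: yv.
- case: j j0 jw jmin vE Uv vsub => // j _ jw jmin vE Uv vsub.
  exists a, (take j r); split => //.
  by apply/allP => y /vsub yr; apply: (allP Ar).
Qed.

End Words1.

Section Model.
Context {d : Order.disp_t} {Y : orderType d}.
Implicit Types (f g h : seq Y -> int) (w x : seq Y).

Fixpoint conv f g w : int :=
  match w with
  | [::] => f [::] * g [::]
  | a :: w' => f [::] * g w + conv (fun u => f (a :: u)) g w'
  end.

Lemma conv_ext f f' g g' w :
  (forall j, f (take j w) = f' (take j w)) ->
  (forall j, g (drop j w) = g' (drop j w)) -> conv f g w = conv f' g' w.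
Proof.
elim: w f f' => [|a w IH] f f' Hf Hg /=; first by rewrite (Hf 0%N) (Hg 0%N).
rewrite (Hf 0%N) (Hg 0%N); congr (_ + _); apply: IH => j.
  exact: (Hf j.+1).
exact: (Hg j.+1).
Qed.

Lemma conv_addl f f' g w : conv (fun u => f u + f' u) g w = conv f g w + conv f' g w.
Proof.
elim: w f f' => [|a w IH] f f' /=; first by rewrite mulrDl.
by rewrite IH mulrDl addrACA.
Qed.

Lemma conv_oppl f g w : conv (fun u => - f u) g w = - conv f g w.
Proof.
elim: w f => [|a w IH] f /=; first by rewrite mulNr.
by rewrite IH mulNr opprD.
Qed.

Lemma conv_scalel c f g w : conv (fun u => c * f u) g w = c * conv f g w.
Proof.
elim: w f => [|a w IH] f /=; first by rewrite mulrA.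
by rewrite IH mulrDr mulrA.
Qed.

Lemma conv_addr f g g' w : conv f (fun u => g u + g' u) w = conv f g w + conv f g' w.
Proof.
elim: w f => [|a w IH] f /=; first by rewrite mulrDr.
by rewrite IH mulrDr addrACA.
Qed.

Lemma conv_oppr f g w : conv f (fun u => - g u) w = - conv f g w.
Proof.
elim: w f => [|a w IH] f /=; first by rewrite mulrN.
by rewrite IH mulrN opprD.
Qed.

Lemma conv_assoc f g h w : conv f (conv g h) w = conv (conv f g) h w.
Proof.
elim: w f g => [|a w IH] f g /=; first by rewrite mulrA.
rewrite conv_addl conv_scalel IH mulrDr !mulrA addrA.
done.
Qed.

Definition star f g : seq Y -> int := fun w => if uniq w then conv f g w else 0.
Definition brM f g : seq Y -> int := fun w => star f g w - star g f w.

Lemma conv_starr f g h w : uniq w -> conv f (star g h) w = conv f (conv g h) w.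
Proof. by move=> U; apply: conv_ext => // j; rewrite /star drop_uniq. Qed.

Lemma conv_starl f g h w : uniq w -> conv (star f g) h w = conv (conv f g) h w.
Proof. by move=> U; apply: conv_ext => // j; rewrite /star take_uniq. Qed.

Lemma brM_lie : is_lie_ring brM.
Proof.
split.
- move=> f g h; apply/funext => w; rewrite /brM /star !addrfctE /=.
  case: (uniq w); last by lia.
  rewrite conv_addl conv_addr; rewrite opprD addrACA //.
- move=> f g h; apply/funext => w; rewrite /brM /star !addrfctE /=.
  case: (uniq w); last by lia.
  rewrite conv_addl conv_addr; rewrite opprD addrACA //.
- by move=> f; apply/funext => w; rewrite /brM subrr.
- move=> f g h; apply/funext => w; rewrite /brM /star !addrfctE /=.
  case U: (uniq w); last by lia.
  rewrite !conv_addr !conv_addl !conv_oppr !conv_oppl !conv_starr // !conv_starl //.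
  rewrite !conv_assoc.
  set A := conv (conv f g) h w; set B := conv (conv f h) g w.
  set C := conv (conv g f) h w; set D := conv (conv g h) f w.
  set E := conv (conv h f) g w; set F := conv (conv h g) f w.
  rewrite /=; lia.
Qed.

Definition fM (y : Y) : seq Y -> int := fun x => if x == [:: y] then 1 else 0.

Lemma conv_at f g p x : (forall u, f u != 0 -> size u = p) ->
  conv f g x = if (p <= size x)%N then f (take p x) * g (drop p x) else 0.
Proof.
elim: x f p => [|a x IH] f p Hf /=.
  case: p Hf => [|p] Hf //; have : f [::] == 0 by apply/negPn/negP => /Hf.
  by move/eqP->; rewrite mul0r.
case: p Hf => [|p] Hf.
  rewrite (IH _ 0%N) /=; last by move=> u /Hf.
  have : f [:: a] == 0 by apply/negPn/negP => /Hf.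
  by rewrite take0 drop0 => /eqP->; rewrite mul0r addr0.
have : f [::] == 0 by apply/negPn/negP => /Hf.
move/eqP->; rewrite mul0r add0r (IH _ p) //.
by move=> u /Hf [].
Qed.

Definition Supp (F : seq Y -> int) s := forall x, F x != 0 -> perm_eq x s.

Lemma Supp_size F s x : Supp F s -> F x != 0 -> size x = size s.
Proof. by move=> H /H /perm_size. Qed.

Lemma star_at F G s x : Supp F s ->
  star F G x = if uniq x && (size s <= size x)%N then F (take (size s) x) * G (drop (size s) x) else 0.
Proof.
move=> H; rewrite /star (conv_at _ _ (p := size s)); last by move=> u /(Supp_size H).
by case: (uniq x).
Qed.

Lemma brM_supp F G s1 s2 : Supp F s1 -> Supp G s2 ->
  Supp (brM F G) (s1 ++ s2) /\ forall x, brM F G x != 0 -> uniq x.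
Proof.
move=> H1 H2.
have key : forall x, brM F G x != 0 -> uniq x /\ perm_eq x (s1 ++ s2).
  move=> x; rewrite /brM (star_at _ _ H1) (star_at _ _ H2).
  case U: (uniq x) => /=; last by [].
  case: ifP => L1; case: ifP => L2.
  - move=> nz; split => //.
    case: (F (take (size s1) x) * G (drop (size s1) x) =P 0) => [E1|/eqP].
      move: nz; rewrite E1 sub0r oppr_eq0 mulf_eq0 negb_or => /andP[nG nF].
      rewrite perm_sym perm_catC -(cat_take_drop (size s2) x) perm_sym.
      by apply: perm_cat; [apply: H2|apply: H1].
    rewrite mulf_eq0 negb_or => /andP[nF nG].
    by rewrite -(cat_take_drop (size s1) x); apply: perm_cat; [apply: H1|apply: H2].
  - rewrite subr0 mulf_eq0 negb_or => /andP[nF nG]; split => //.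
    by rewrite -(cat_take_drop (size s1) x); apply: perm_cat; [apply: H1|apply: H2].
  - rewrite sub0r oppr_eq0 mulf_eq0 negb_or => /andP[nG nF]; split => //.
    rewrite perm_sym perm_catC -(cat_take_drop (size s2) x) perm_sym.
    by apply: perm_cat; [apply: H2|apply: H1].
  - by rewrite subrr eqxx.
by split => x /key [].
Qed.

Lemma rnbr_supp s : s != [::] -> Supp (rnbr brM fM s) s.
Proof.
elim: s => [|y [|z s] IH] // _.
  by move=> x; rewrite /= /fM; case: (x =P [:: y]) => [->|_]; rewrite ?perm_refl ?eqxx.
have := IH isT; set R := rnbr _ _ _ => HR.
have Hy : Supp (fM y) [:: y].
  by move=> x; rewrite /fM; case: (x =P [:: y]) => [->|_]; rewrite ?perm_refl ?eqxx.
exact: (brM_supp Hy HR).1.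
Qed.

Lemma Supp_fM y : Supp (fM y) [:: y].
Proof. by move=> x; rewrite /fM; case: (x =P [:: y]) => [->|_]; rewrite ?perm_refl ?eqxx. Qed.

Lemma brM_rel : RL_relations brM fM.
Proof.
case=> [|y [|z s]] // _ nU; apply/funext => x.
have HR := rnbr_supp (s := z :: s) isT.
have [H1 H2] := brM_supp (@Supp_fM y) HR.
change (brM (fM y) (rnbr brM fM (z :: s)) x = 0).
apply/eqP/negPn/negP => nz.
have := H2 _ nz; rewrite (perm_uniq (H1 _ nz)) => U.
by rewrite U in nU.
Qed.

Definition Lead (F : seq Y -> int) w :=
  F w = 1 /\ forall x, F x != 0 -> perm_eq x w /\ lexle w x.

Lemma Lead_fM y : Lead (fM y) [:: y].
Proof.
split; first by rewrite /fM eqxx.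
move=> x; rewrite /fM; case: (x =P [:: y]) => [->|_]; last by rewrite eqxx.
by rewrite perm_refl /lexle eqxx.
Qed.

Lemma Lead_Supp F w : Lead F w -> Supp F w.
Proof. by move=> [_ H] x /H []. Qed.

Lemma lead_br Fu Fv u v (a : Y) u' : Lead Fu u -> Lead Fv v -> u = a :: u' ->
  (0 < size v)%N -> uniq (u ++ v) -> all (fun y => (a < y)%O) v ->
  Lead (brM Fu Fv) (u ++ v).
Proof.
move=> Hu Hv uE v0 U Av.
have Su := Lead_Supp Hu; have Sv := Lead_Supp Hv.
split.
  rewrite /brM (star_at _ _ Su) (star_at _ _ Sv) U size_cat leq_addr leq_addl /=.
  rewrite take_size_cat // drop_size_cat // Hu.1 Hv.1.
  have -> : Fv (take (size v) (u ++ v)) = 0.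
    apply/eqP/negPn/negP => /Sv P.
    have : a \in take (size v) (u ++ v).
      by rewrite uE; case: (size v) v0 => // n _; rewrite /= inE eqxx.
    rewrite (perm_mem P) => av; by move: (allP Av a av); rewrite ltxx.
  by rewrite mul0r subr0.
move=> x; rewrite /brM (star_at _ _ Su) (star_at _ _ Sv).
set A := (if _ then _ else _); set B := (if _ then _ else _) => nz.
have [nA|nB] : A != 0 \/ B != 0.
  by case: (A =P 0) => [E|/eqP]; [right; move: nz; rewrite E sub0r oppr_eq0|left].
- move: nA; rewrite /A; case: ifP => [/andP[Ux L1]|_]; last by rewrite eqxx.
  rewrite mulf_eq0 negb_or => /andP[nF nG].
  have [Pu Lu] := Hu.2 _ nF; have [Pv Lv] := Hv.2 _ nG.
  rewrite -(cat_take_drop (size u) x); split; first by apply: perm_cat.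
  by apply: lexle_cat => //; rewrite (perm_size Pu).
- move: nB; rewrite /B; case: ifP => [/andP[Ux L1]|_]; last by rewrite eqxx.
  rewrite mulf_eq0 negb_or => /andP[nG nF].
  have [Pv Lv] := Hv.2 _ nG; have [Pu Lu] := Hu.2 _ nF.
  split.
    rewrite -(cat_take_drop (size v) x) perm_sym perm_catC perm_sym.
    by apply: perm_cat.
  case: x {A B nz} Ux L1 nG nF Pv Pu Lv Lu => [|b x] Ux L1 nG nF Pv Pu Lv Lu.
    by move: L1 v0 => /=; lia.
  have : b \in v.
    rewrite -(perm_mem Pv); case: (size v) v0 => // n _; by rewrite /= inE eqxx.
  move=> /(allP Av) ab; by rewrite uE /lexle /= ab orbT.
Qed.

End Model.

Section Gen.
Context {d : Order.disp_t} {Y : orderType d}.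
Variables (L : zmodType) (br : L -> L -> L) (i : Y -> L).

Lemma lmr_unfold n (w : seq Y) : (2 <= size w)%N ->
  lyndon_mon_rec br i n.+1 w =
  br (lyndon_mon_rec br i n (take (size w - size (min_suffix w)) w))
     (lyndon_mon_rec br i n (min_suffix w)).
Proof. by case: w => [|a [|b w]]. Qed.

Lemma lmr_one n (y : Y) : lyndon_mon_rec br i n.+1 [:: y] = i y.
Proof. by []. Qed.

Definition lnext (z : L) (s : seq Y) : L := foldl (fun acc y => br acc (i y)) z s.

Lemma lnext_rcons z s y : lnext z (rcons s y) = br (lnext z s) (i y).
Proof. by rewrite /lnext foldl_rcons. Qed.

Lemma lnext_cat z s t : lnext z (s ++ t) = lnext (lnext z s) t.
Proof. by rewrite /lnext foldl_cat. Qed.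

Lemma rnbr_cons y s : s != [::] -> rnbr br i (y :: s) = br (i y) (rnbr br i s).
Proof. by case: s. Qed.

End Gen.

Section Model2.
Context {d : Order.disp_t} {Y : orderType d}.

Lemma lead_rec n (w : seq Y) : uniq w -> lyndon w -> (0 < size w <= n)%N ->
  Lead (lyndon_mon_rec brM fM n w) w.
Proof.
elim: n w => [|n IH] w Uw Lw /andP[w0 wn]; first by move: w0 wn; lia.
case: w Uw Lw w0 wn => [|a [|b r]] // Uw Lw w0 wn.
  by rewrite lmr_one; apply: Lead_fM.
rewrite lmr_unfold //.
have [E /andP[Lu Uu] /andP[Lv Uv] [a' [u' [uE Av]]]] := std_fact Uw Lw (isT : (2 <= size (a :: b :: r))%N).
set v := min_suffix _ in E Lv Uv Av *.
set u := take _ _ in E Lu Uu uE *.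
have su : (0 < size u)%N by rewrite uE.
have sv : (0 < size v)%N by case: (v) Lv.
have szE : size (a :: b :: r) = (size u + size v)%N by rewrite {1}E size_cat.
rewrite [X in Lead _ X]E; apply: (lead_br (a := a') (u' := u')) => //.
- apply: IH => //; rewrite su /=; move: wn; rewrite szE; lia.
- apply: IH => //; rewrite sv /=; move: wn; rewrite szE; lia.
- by rewrite -E.
Qed.

Lemma lnM_supp (a : Y) q : Supp (lnext brM fM (fM a) q) (a :: q).
Proof.
elim/last_ind: q => [|q y IH]; first exact: Supp_fM.
rewrite lnext_rcons -cats1 -cat_cons.
exact: (brM_supp IH (@Supp_fM _ _ y)).1.
Qed.

Lemma lnM_coef (a : Y) q p : a \notin q -> uniq (a :: p) ->
  lnext brM fM (fM a) q (a :: p) = (q == p)%:Z.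
Proof.
elim/last_ind: q p => [|q y IH] p aq Up.
  rewrite /lnext /= /fM eqseq_cons eqxx andTb.
  by case: p Up.
have ay : a != y by apply: contraNneq aq => ->; rewrite mem_rcons inE eqxx.
have aq' : a \notin q by apply: contra aq; rewrite mem_rcons inE => ->; rewrite orbT.
rewrite lnext_rcons /brM (star_at _ _ (@lnM_supp a q)) (star_at _ _ (@Supp_fM _ _ y)).
have -> : fM y (take (size [:: y]) (a :: p)) = 0.
  by rewrite /fM /= eqseq_cons (negbTE ay).
rewrite mul0r if_same subr0 Up andTb.
have -> : (size (a :: q) <= size (a :: p))%N = (size q <= size p)%N by [].
have -> : take (size (a :: q)) (a :: p) = a :: take (size q) p by [].
have -> : drop (size (a :: q)) (a :: p) = drop (size q) p by [].
case: leqP => szq.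
  rewrite IH //; last exact: (take_uniq (size q).+1 Up).
  have -> : (rcons q y == p) = (q == take (size q) p) && (drop (size q) p == [:: y]).
    rewrite -cats1 -{1}(cat_take_drop (size q) p) eqseq_cat ?[[:: y] == _]eq_sym //.
    by rewrite size_take_min; apply/esym/minn_idPl.
  rewrite /fM.
  by case: (q == _); case: (_ == _).
have -> : (rcons q y == p) = false.
  by apply/negbTE/negP => /eqP E; move: szq; rewrite -E size_rcons ltnNge leqnSn.
by [].
Qed.

End Model2.

Section Additive.
Variables (L M : zmodType) (h : L -> M).
Hypothesis hD : forall x y, h (x + y) = h x + h y.

Lemma hadd0 : h 0 = 0.
Proof. by apply: (@addrI _ (h 0)); rewrite -hD !addr0. Qed.

Lemma haddN x : h (- x) = - h x.
Proof. by apply: (@addrI _ (h x)); rewrite -hD !subrr hadd0. Qed.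

Lemma haddMn x n : h (x *+ n) = h x *+ n.
Proof. by elim: n => [|n IH]; rewrite ?mulr0n ?hadd0 // !mulrS hD IH. Qed.

Lemma haddMz x n : h (x *~ n) = h x *~ n.
Proof.
case: n => n; first by rewrite -!pmulrn haddMn.
by rewrite !NegzE !mulrNz haddN -!pmulrn haddMn.
Qed.

Lemma hadd_sum (I : Type) (s : seq I) (P : pred I) (F : I -> L) :
  h (\sum_(j <- s | P j) F j) = \sum_(j <- s | P j) h (F j).
Proof.
elim: s => [|a s IH]; first by rewrite !big_nil hadd0.
by rewrite !big_cons; case: (P a); rewrite ?hD IH.
Qed.

End Additive.

Section Span.
Variables (L : zmodType).

Definition SpanF (I : eqType) (F : I -> L) (A : I -> Prop) (x : L) :=
  exists s : seq (int * I), (forall q, q \in s -> A q.2) /\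
    x = \sum_(q <- s) F q.2 *~ q.1.

Variables (I : eqType) (F : I -> L) (A : I -> Prop).

Lemma span0 : SpanF F A 0.
Proof. by exists [::]; rewrite big_nil. Qed.

Lemma spanD x y : SpanF F A x -> SpanF F A y -> SpanF F A (x + y).
Proof.
move=> [s [Hs ->]] [t [Ht ->]]; exists (s ++ t); rewrite big_cat; split => //.
by move=> q; rewrite mem_cat => /orP[/Hs|/Ht].
Qed.

Lemma spanZ x c : SpanF F A x -> SpanF F A (x *~ c).
Proof.
move=> [s [Hs ->]]; exists [seq (q.1 * c, q.2) | q <- s]; split.
  by move=> q /mapP[q' /Hs H ->].
by rewrite big_map mulrz_suml; apply: eq_bigr => q _; rewrite mulrzA.
Qed.

Lemma spanN x : SpanF F A x -> SpanF F A (- x).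
Proof. by move=> /(spanZ (-1)); rewrite mulrN1z. Qed.

Lemma spanB x y : SpanF F A x -> SpanF F A y -> SpanF F A (x - y).
Proof. by move=> Hx /spanN; apply: spanD. Qed.

Lemma span_gen j : A j -> SpanF F A (F j).
Proof.
by move=> Aj; exists [:: (1, j)]; rewrite big_seq1 mulr1z; split => // q; rewrite inE => /eqP->.
Qed.

Lemma span_sum (J : eqType) (r : seq J) (P : pred J) (G : J -> L) :
  (forall j, j \in r -> P j -> SpanF F A (G j)) -> SpanF F A (\sum_(j <- r | P j) G j).
Proof.
move=> H; rewrite big_seq_cond; apply: big_ind => //.
- exact: span0.
- exact: spanD.
- by move=> j /andP[jr Pj]; apply: H.
Qed.

Lemma span_mono (A' : I -> Prop) x : (forall j, A j -> A' j) -> SpanF F A x -> SpanF F A' x.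
Proof. by move=> H [s [Hs ->]]; exists s; split => // q /Hs /H. Qed.

Lemma span_collapse x (r : seq I) : SpanF F A x -> uniq r -> (forall j, A j -> j \in r) ->
  exists c : I -> int, x = \sum_(j <- r) F j *~ c j.
Proof.
move=> [s [Hs ->]] Ur Hr; exists (fun j => \sum_(q <- s | q.2 == j) q.1).
under [RHS]eq_bigr => j _ do rewrite mulrz_sumr.
rewrite (exchange_big_dep xpredT) //=.
apply: eq_big_seq => q qs.
rewrite (eq_bigr (fun _ => F q.2 *~ q.1)); last by move=> j /eqP->.
rewrite -big_filter (eq_filter (a2 := pred1 q.2)); last by move=> j /=; rewrite eq_sym.
by rewrite filter_pred1_uniq ?big_seq1 //; apply/Hr/Hs.
Qed.

End Span.

Section SpanBind.
Variables (L M : zmodType) (I J : eqType).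

Lemma span_bind (F : I -> L) (A : I -> Prop) (G : J -> M) (B : J -> Prop) (h : L -> M) x :
  (forall x y, h (x + y) = h x + h y) -> SpanF F A x ->
  (forall j, A j -> SpanF G B (h (F j))) -> SpanF G B (h x).
Proof.
move=> hD [s [Hs ->]] H; rewrite hadd_sum //; apply: span_sum => q qs _.
by rewrite haddMz //; apply/spanZ/H/Hs.
Qed.

End SpanBind.

Lemma span_reindex (L : zmodType) (I J : eqType) (F : I -> L) (A : I -> Prop) (G : J -> L) (B : J -> Prop) x :
  SpanF F A x -> (forall j, A j -> exists k, G k = F j /\ B k) -> SpanF G B x.
Proof.
move=> Hx H; have := @span_bind L L I J F A G B id x (fun _ _ => erefl) Hx; apply => j /H [k [<- Bk]].
exact: span_gen.
Qed.



Fixpoint leaves {Y : Type} (t : btree Y) : seq Y :=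
  match t with
  | BLeaf y => [:: y]
  | BNode t1 t2 => leaves t1 ++ leaves t2
  end.

Lemma bt_len_leaves {Y : Type} (t : btree Y) : bt_len t = size (leaves t).
Proof. by elim: t => //= t1 -> t2 ->; rewrite size_cat. Qed.

Section Lie.
Context {d : Order.disp_t} {Y : orderType d}.
Variables (L : zmodType) (br : L -> L -> L) (i : Y -> L).
Hypothesis Hlie : is_lie_ring br.

Let brDl := br_addl Hlie.
Let brDr := br_addr Hlie.

Lemma br_anti x y : br x y = - br y x.
Proof.
have := br_alt Hlie (x + y); rewrite brDl !brDr !(br_alt Hlie) add0r addr0.
by move/eqP; rewrite addr_eq0 => /eqP.
Qed.

Lemma brNl x y : br (- x) y = - br x y.
Proof. exact: (haddN (h := br^~ y)). Qed.

Lemma brNr x y : br x (- y) = - br x y.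
Proof. exact: (haddN (h := br x)). Qed.

Lemma br_jac z a b : br z (br a b) = br (br z a) b - br (br z b) a.
Proof.
have := br_jacobi Hlie z a b.
rewrite [br a (br b z)]br_anti [br b z]br_anti brNl opprK.
rewrite [br b (br z a)]br_anti => /eqP; rewrite -addrA addr_eq0 => /eqP->.
by rewrite opprD opprK addrC.
Qed.

Definition LN z := lnext br i z.

Lemma ad_step z x eB (sA sB : seq Y) :
  SpanF (lnext br i z) (fun q => perm_eq q sA) x ->
  (forall z', SpanF (lnext br i z') (fun q => perm_eq q sB) (br z' eB)) ->
  SpanF (lnext br i z) (fun q => perm_eq q (sA ++ sB)) (br x eB).
Proof.
move=> Hx H; apply: (span_bind (h := br^~ eB)) Hx _ => [x1 x2|q Pq]; first exact: brDl.
apply: span_reindex (H (lnext br i z q)) _ => q' Pq'.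
exists (q ++ q'); split; first by rewrite lnext_cat.
exact: perm_cat.
Qed.

Lemma ad t z : SpanF (lnext br i z) (fun q => perm_eq q (leaves t)) (br z (bt_eval br i t)).
Proof.
elim: t z => [y|t1 IH1 t2 IH2] z /=.
  have -> : br z (i y) = lnext br i z [:: y] by [].
  by apply: span_gen.
rewrite br_jac; apply: spanB.
  exact: ad_step.
apply: span_mono (ad_step (IH2 z) IH1) => q; rewrite perm_sym perm_catC perm_sym.
done.
Qed.

Lemma ln_span t (a : Y) : a \in leaves t ->
  SpanF (lnext br i (i a)) (fun q => perm_eq (a :: q) (leaves t)) (bt_eval br i t).
Proof.
elim: t => [y|t1 IH1 t2 IH2] /=.
  rewrite inE => /eqP->; have -> : i y = lnext br i (i y) [::] by [].
  by apply: span_gen.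
rewrite mem_cat; case at1: (a \in leaves t1) => /=.
  move=> _; apply: (span_bind (h := br^~ (bt_eval br i t2))) (IH1 at1) _ => [x1 x2|q Pq].
    exact: brDl.
  apply: span_reindex (ad t2 _) _ => q' Pq'.
  exists (q ++ q'); split; first by rewrite lnext_cat.
  by rewrite -cat_cons; apply: perm_cat.
move=> at2; rewrite br_anti; apply: spanN.
apply: (span_bind (h := br^~ (bt_eval br i t1))) (IH2 at2) _ => [x1 x2|q Pq].
  exact: brDl.
apply: span_reindex (ad t1 _) _ => q' Pq'.
exists (q ++ q'); split; first by rewrite lnext_cat.
rewrite perm_sym perm_catC perm_sym -cat_cons; apply: perm_cat => //.
Qed.

Lemma lnext_rnbr (a : Y) q :
  lnext br i (i a) q = rnbr br i (rev (a :: q)) \/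
  lnext br i (i a) q = - rnbr br i (rev (a :: q)).
Proof.
elim/last_ind: q => [|q y IH]; first by left.
rewrite lnext_rcons -rcons_cons rev_rcons rnbr_cons; last by rewrite rev_cons; case: (rev q).
case: IH => ->; [right|left]; rewrite br_anti //.
by rewrite brNr opprK.
Qed.

Hypothesis Hrel : RL_relations br i.

Lemma lnext_zero (a : Y) q : ~~ uniq (a :: q) -> lnext br i (i a) q = 0.
Proof.
move=> nU.
have H : rnbr br i (rev (a :: q)) = 0.
  apply: Hrel; last by rewrite rev_uniq.
  rewrite size_rev; case: q nU => // b q _.
by case: (lnext_rnbr a q) => ->; rewrite H ?oppr0.
Qed.

End Lie.

Lemma ex_min (T : eqType) (s : seq T) (P : pred T) (lt : rel T) :
  irreflexive lt -> transitive lt -> has P s ->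
  exists m, [/\ m \in s, P m & forall y, y \in s -> P y -> ~~ lt y m].
Proof.
move=> irr tr; elim: s => [|x s IH] //= /orP[Px|hs].
- case hs: (has P s).
    have [m [ms Pm mm]] := IH hs.
    case: (boolP (lt x m)) => xm.
      exists x; split; rewrite ?inE ?eqxx //.
      move=> y; rewrite inE => /orP[/eqP->|ys Py]; first by rewrite irr.
      by apply: contra (mm y ys Py) => yx; apply: tr yx xm.
    exists m; split; rewrite ?inE ?ms ?orbT //.
    by move=> y; rewrite inE => /orP[/eqP->|ys Py] //; apply: mm.
  exists x; split; rewrite ?inE ?eqxx //.
  move=> y; rewrite inE => /orP[/eqP->|ys Py]; first by rewrite irr.
  by move/negbT: hs => /hasPn /(_ y ys); rewrite Py.
- have [m [ms Pm mm]] := IH hs.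
  case: (boolP (P x && lt x m)) => /= [/andP[Px xm]|nx].
    exists x; split; rewrite ?inE ?eqxx //.
    move=> y; rewrite inE => /orP[/eqP->|ys Py]; first by rewrite irr.
    by apply: contra (mm y ys Py) => yx; apply: tr yx xm.
  exists m; split; rewrite ?inE ?ms ?orbT //.
  move=> y; rewrite inE => /orP[/eqP->|ys Py]; last exact: mm.
  by move=> Px; move: nx; rewrite Px.
Qed.

Lemma count_lt (T : eqType) (a1 a2 : pred T) (s : seq T) x0 :
  (forall x, a1 x -> a2 x) -> x0 \in s -> a2 x0 -> ~~ a1 x0 -> (count a1 s < count a2 s)%N.
Proof.
move=> sub; elim: s => [|y s IH] //=; rewrite inE => /orP[/eqP<-|xs] a2x a1x.
  rewrite (negbTE a1x) a2x add0n add1n ltnS; exact: sub_count.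
have := IH xs a2x a1x.
have : (a1 y <= a2 y)%N by case: (a1 y) (sub y) => // /(_ isT) ->.
lia.
Qed.

Section WithG.
Context {d : Order.disp_t} {Y : orderType d}.
Variables (L : zmodType) (br : L -> L -> L) (i : Y -> L).
Hypothesis Hlie : is_lie_ring br.
Hypothesis Hrel : RL_relations br i.
Variables (g : L -> seq Y -> int).
Hypothesis Hg : is_lie_hom br brM g.
Hypothesis Hgi : forall y, g (i y) = fM y.

Let gD := Hg.1.
Let gbr := Hg.2.

Lemma g_lnext z q : g (lnext br i z q) = lnext brM fM (g z) q.
Proof.
elim/last_ind: q => [|q y IH] //.
by rewrite !lnext_rcons gbr IH Hgi.
Qed.

Lemma g_lmr n (w : seq Y) : g (lyndon_mon_rec br i n w) = lyndon_mon_rec brM fM n w.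
Proof.
elim: n w => [|n IH] w /=; first exact: (hadd0 gD).
by case: w => [|y [|z w]] /=; rewrite ?gbr ?IH ?Hgi.
Qed.

Lemma lmr_tree n (w : seq Y) : (0 < size w <= n)%N ->
  exists t, bt_eval br i t = lyndon_mon_rec br i n w /\ leaves t = w.
Proof.
elim: n w => [|n IH] w /andP[w0 wn]; first by move: w0 wn; lia.
case: w w0 wn => [|y [|z w]] // w0 wn.
  by exists (BLeaf y).
rewrite lmr_unfold //.
have [j [/andP[j0 jw] vE _]] := min_suffixP (isT : (2 <= size [:: y, z & w])%N).
rewrite vE size_drop subKn ?(ltnW jw) //.
have s1 : (0 < size (take j [:: y, z & w]) <= n)%N.
  by rewrite size_take jw; move: j0 jw wn; clear; lia.
have s2 : (0 < size (drop j [:: y, z & w]) <= n)%N.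
  by rewrite size_drop; move: j0 jw wn; clear; lia.
have [t1 [E1 L1]] := IH _ s1.
have [t2 [E2 L2]] := IH _ s2.
by exists (BNode t1 t2); rewrite /= E1 E2 L1 L2 cat_take_drop.
Qed.

Lemma lyndon_tree (w : seq Y) : (0 < size w)%N ->
  exists t, bt_eval br i t = lyndon_mon br i w /\ leaves t = w.
Proof. by move=> w0; apply: lmr_tree; rewrite w0 leqnn. Qed.

Lemma lead_P (w : seq Y) : uniq w -> lyndon w -> Lead (g (lyndon_mon br i w)) w.
Proof.
move=> Uw Lw; rewrite /lyndon_mon g_lmr; apply: lead_rec => //.
by rewrite leqnn andbT; case: w Uw Lw.
Qed.

Lemma g_sum_at (I : Type) (s : seq I) (P : pred I) (F : I -> L) (c : I -> int) x :
  g (\sum_(j <- s | P j) F j *~ c j) x = \sum_(j <- s | P j) g (F j) x *~ c j.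
Proof.
rewrite (hadd_sum gD) (hadd_sum (h := fun F : seq Y -> int => F x)) //.
by apply: eq_bigr => j _; rewrite (haddMz gD) (haddMz (h := fun F : seq Y -> int => F x)).
Qed.

Lemma indep_gen (I : eqType) (phi : I -> seq Y) (s : seq I) (c : I -> int) :
  uniq s -> {in s &, injective phi} ->
  (forall j, j \in s -> lyndon (phi j) && uniq (phi j)) ->
  \sum_(j <- s) lyndon_mon br i (phi j) *~ c j = 0 -> forall j, j \in s -> c j = 0.
Proof.
move=> Us inj Hl H0 j js; apply/eqP/negPn/negP => cj.
have irr : irreflexive (fun k k' => lexlt (phi k) (phi k')).
  by move=> k; rewrite /= (negbTE (lexlt_irr _)).
have tr : transitive (fun k k' => lexlt (phi k) (phi k')).
  by move=> k1 k2 k3; apply: lexlt_trans.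
have hs : has (fun k => c k != 0) s by apply/hasP; exists j.
have [m [ms cm mmin]] := ex_min irr tr hs.
have := congr1 (fun F => F (phi m)) (congr1 g H0).
rewrite g_sum_at (hadd0 gD) (bigD1_seq m) //=.
have /andP[Lm Um] := Hl m ms.
rewrite (lead_P Um Lm).1 intz big1_seq ?addr0; first by move/eqP; rewrite (negbTE cm).
move=> k /andP[km ks].
case: (c k =P 0) => [->|/eqP ck]; first by rewrite mulr0z.
case: (g (lyndon_mon br i (phi k)) (phi m) =P 0) => [->|/eqP nz]; first by rewrite mul0rz.
have /andP[Lk Uk] := Hl k ks.
have [_ /orP[/eqP E|lt]] := (lead_P Uk Lk).2 _ nz.
  by move: km; rewrite (inj _ _ ks ms E) eqxx.
by move: (mmin k ks ck); rewrite lt.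
Qed.

Lemma ln_to_lyndon (s : seq Y) (a : Y) : uniq s -> a \in s ->
  (forall y, y \in s -> (a <= y)%O) ->
  forall p, perm_eq (a :: p) s ->
  SpanF (lyndon_mon br i) (fun w => perm_eq w s /\ lyndon w) (lnext br i (i a) p).
Proof.
move=> Us aS amin.
set R := rem a s; set Perms := permutations R.
have permE p : perm_eq (a :: p) s = (p \in Perms).
  by rewrite mem_permutations (permPr (perm_to_rem aS) (a :: p)) perm_cons.
have aR : a \notin R by rewrite (mem_rem_uniq _ Us) inE eqxx.
have UL p : p \in Perms -> uniq (a :: p) /\ lyndon (a :: p).
  move=> pP; have pa : perm_eq (a :: p) s by rewrite permE.
  have Ua : uniq (a :: p) by rewrite (perm_uniq pa).
  split => //; rewrite lyndon_uniq //; apply/allP => y yp.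
  have ys : y \in s by rewrite -(perm_mem pa) inE yp orbT.
  rewrite lt_neqAle amin // andbT.
  by apply/eqP => ay; move: Ua; rewrite ay /= yp.
have aP q : q \in Perms -> a \notin q.
  by move=> qP; move: (UL q qP) => [/andP[]].
set coef := fun p p' => g (lyndon_mon br i (a :: p)) (a :: p').
have g_ln q : g (lnext br i (i a) q) = lnext brM fM (fM a) q by rewrite g_lnext Hgi.
have fact1 p : p \in Perms ->
    lyndon_mon br i (a :: p) = \sum_(p' <- Perms) lnext br i (i a) p' *~ coef p p'.
  move=> pP.
  have [t [Et Lt]] := @lyndon_tree (a :: p) isT.
  have at' : a \in leaves t by rewrite Lt inE eqxx.
  have := ln_span i Hlie at'; rewrite Et Lt => Hs.
  have [c Ec] := span_collapse Hs (permutations_uniq R)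
    (fun q (Pq : perm_eq (a :: q) (a :: p)) =>
       (ltac:(by rewrite -permE (perm_trans Pq) // permE) : q \in Perms)).
  rewrite {1}Ec; apply: eq_big_seq => p' p'P; congr (_ *~ _).
  rewrite /coef Ec g_sum_at (bigD1_seq p') ?permutations_uniq //= big1_seq.
    by rewrite addr0 g_ln lnM_coef ?eqxx ?intz //; [apply: aP|case: (UL p' p'P)].
  move=> q /andP[qp' qP]; rewrite g_ln lnM_coef; first by rewrite (negbTE qp') mul0rz.
    exact: aP.
  by case: (UL p' p'P).
have coef1 p : p \in Perms -> coef p p = 1.
  by move=> pP; case: (UL p pP) => U L'; rewrite /coef (lead_P U L').1.
have fact2 p p' : p \in Perms -> coef p p' != 0 -> p' = p \/ lexlt p p'.
  move=> pP nz; case: (UL p pP) => U L'.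
  have [_ /orP[/eqP [E]|lt]] := (lead_P U L').2 _ nz; first by left.
  by right; move: lt => /=; rewrite ltxx eqxx.
suff H n p : p \in Perms -> (count (lexlt p) Perms < n)%N ->
    SpanF (lyndon_mon br i) (fun w => perm_eq w s /\ lyndon w) (lnext br i (i a) p).
  by move=> p pa; apply: (H (count (lexlt p) Perms).+1) => //; rewrite -permE.
elim: n p => [|n IH] p pP cnt //.
have E : lnext br i (i a) p = lyndon_mon br i (a :: p) -
    \sum_(p' <- Perms | p' != p) lnext br i (i a) p' *~ coef p p'.
  by rewrite (fact1 p pP) (bigD1_seq p) ?permutations_uniq //= coef1 // mulr1z addrK.
rewrite E; apply: spanB.
  by apply: span_gen; split; [rewrite permE|case: (UL p pP)].
apply: span_sum => p' p'P p'p.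
case: (coef p p' =P 0) => [->|/eqP nz]; first by rewrite mulr0z; apply: span0.
apply: spanZ; apply: IH => //.
have [E'|lt] := fact2 p p' pP nz; first by move: p'p; rewrite E' eqxx.
apply: leq_trans (count_lt (a1 := lexlt p') (a2 := lexlt p) _ p'P lt (lexlt_irr _)) _.
  by move=> x; apply: lexlt_trans.
by rewrite -ltnS.
Qed.

Lemma leaves_nil (t : btree Y) : leaves t != [::].
Proof. by elim: t => //= t1 IH1 t2 IH2; case: (leaves t1) IH1. Qed.

Lemma ex_minY (s : seq Y) : s != [::] -> exists a, a \in s /\ forall y, y \in s -> (a <= y)%O.
Proof.
move=> s0.
have irr : irreflexive (fun x y : Y => (x < y)%O) by move=> x; rewrite ltxx.
have tr : transitive (fun x y : Y => (x < y)%O) by move=> x y z; apply: lt_trans.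
have hs : has predT s by case: s s0.
have [m [ms _ mm]] := ex_min irr tr hs.
by exists m; split => // y ys; rewrite leNgt; apply: mm.
Qed.

Lemma tree_span (t : btree Y) :
  SpanF (lyndon_mon br i) (fun w => perm_eq w (leaves t) /\ lyndon w /\ uniq w)
    (bt_eval br i t).
Proof.
have [a [al amin]] := ex_minY (leaves_nil t).
have Hs := ln_span i Hlie al.
case U: (uniq (leaves t)).
  apply: (span_bind (h := id)) Hs _ => // q Pq.
  apply: span_mono (ln_to_lyndon U al amin Pq) => w [Pw Lw]; split => //; split => //.
  by rewrite (perm_uniq Pw).
apply: (span_bind (h := id)) Hs _ => // q Pq.
rewrite /= (lnext_zero Hlie Hrel); first exact: span0.
by rewrite (perm_uniq Pq) U.
Qed.

End WithG.

Section Gen.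
Context {d : Order.disp_t} {Y : orderType d}.
Variables (L : zmodType) (br : L -> L -> L) (i : Y -> L).
Hypothesis HRL : is_RL br i.

Definition Pgen (x : L) := exists s : seq (int * btree Y),
  x = \sum_(q <- s) bt_eval br i q.2 *~ q.1.

Lemma Pgen0 : Pgen 0.
Proof. by exists [::]; rewrite big_nil. Qed.

Lemma PgenD x y : Pgen x -> Pgen y -> Pgen (x + y).
Proof. by move=> [s ->] [t ->]; exists (s ++ t); rewrite big_cat. Qed.

Lemma PgenZ x c : Pgen x -> Pgen (x *~ c).
Proof.
move=> [s ->]; exists [seq (q.1 * c, q.2) | q <- s].
by rewrite big_map mulrz_suml; apply: eq_bigr => q _; rewrite mulrzA.
Qed.

Lemma PgenN x : Pgen x -> Pgen (- x).
Proof. by move=> /(PgenZ (-1)); rewrite mulrN1z. Qed.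

Lemma Pgen_sum (J : Type) (r : seq J) (G : J -> L) :
  (forall j, Pgen (G j)) -> Pgen (\sum_(j <- r) G j).
Proof. by move=> H; apply: big_ind => //; [exact: Pgen0|exact: PgenD]. Qed.

Lemma Pgen_tree t : Pgen (bt_eval br i t).
Proof. by exists [:: (1, t)]; rewrite big_seq1 mulr1z. Qed.

Hypothesis Hlie : is_lie_ring br.

Lemma Pgen_br x y : Pgen x -> Pgen y -> Pgen (br x y).
Proof.
move=> [s ->] [t ->].
rewrite (hadd_sum (h := br^~ _)); last by move=> ? ?; apply: (br_addl Hlie).
apply: Pgen_sum => q; rewrite (haddMz (h := br^~ _)); last by move=> ? ?; apply: (br_addl Hlie).
apply: PgenZ.
rewrite (hadd_sum (h := br _)); last by move=> ? ?; apply: (br_addr Hlie).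
apply: Pgen_sum => r; rewrite (haddMz (h := br _)); last by move=> ? ?; apply: (br_addr Hlie).
by apply: PgenZ; apply: (Pgen_tree (BNode q.2 r.2)).
Qed.

Definition Sub := {x : L | Pgen x}.
HB.instance Definition _ := gen_eqMixin Sub.
HB.instance Definition _ := gen_choiceMixin Sub.

Lemma Sub_eq (u v : Sub) : sval u = sval v -> u = v.
Proof.
case: u v => [x px] [y py] /= E; subst y; congr exist; exact: Prop_irrelevance.
Qed.

Definition zeroS : Sub := exist _ 0 Pgen0.
Definition addS (u v : Sub) : Sub := exist _ (sval u + sval v) (PgenD (svalP u) (svalP v)).
Definition oppS (u : Sub) : Sub := exist _ (- sval u) (PgenN (svalP u)).

Lemma addSA : associative addS.
Proof. by move=> u v w; apply: Sub_eq; rewrite /= addrA. Qed.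
Lemma addSC : commutative addS.
Proof. by move=> u v; apply: Sub_eq; rewrite /= addrC. Qed.
Lemma add0S : left_id zeroS addS.
Proof. by move=> u; apply: Sub_eq; rewrite /= add0r. Qed.
Lemma addNS : left_inverse zeroS oppS addS.
Proof. by move=> u; apply: Sub_eq; rewrite /= addNr. Qed.

HB.instance Definition _ := GRing.isZmodule.Build Sub addSA addSC add0S addNS.

Definition brS (u v : Sub) : Sub := exist _ (br (sval u) (sval v)) (Pgen_br (svalP u) (svalP v)).
Definition iS (y : Y) : Sub := exist _ (i y) (Pgen_tree (BLeaf y)).

Lemma brS_lie : is_lie_ring brS.
Proof.
split.
- by move=> u v w; apply: Sub_eq; rewrite /= (br_addl Hlie).
- by move=> u v w; apply: Sub_eq; rewrite /= (br_addr Hlie).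
- by move=> u; apply: Sub_eq; rewrite /= (br_alt Hlie).
- by move=> u v w; apply: Sub_eq; rewrite /= (br_jacobi Hlie).
Qed.

Lemma sval_rnbr s : sval (rnbr brS iS s) = rnbr br i s.
Proof.
elim: s => [|y s IH] //; case: s IH => [|z s] IH //.
by rewrite (rnbr_cons br i y (s := z :: s)) // (rnbr_cons brS iS y (s := z :: s)) // -IH.
Qed.

Hypothesis Hrel : RL_relations br i.

Lemma brS_rel : RL_relations brS iS.
Proof. by move=> s s2 nU; apply: Sub_eq; rewrite sval_rnbr /= Hrel. Qed.

Hypothesis Huniv : forall (M : zmodType) (brM : M -> M -> M) (f : Y -> M),
    is_lie_ring brM -> RL_relations brM f ->
    exists! g : L -> M, is_lie_hom br brM g /\ forall y, g (i y) = f y.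

Lemma generation x : Pgen x.
Proof.
have [gS [[HgS HgSi] _]] := Huniv brS_lie brS_rel.
have [g0 [_ U]] := Huniv Hlie Hrel.
have E1 : g0 = id.
  by apply: U; split.
have E2 : g0 = (fun x => sval (gS x)).
  apply: U; split; last by move=> y; rewrite HgSi.
  split => [a b|a b]; first by rewrite (proj1 HgS).
  by rewrite (proj2 HgS).
have : x = sval (gS x) by rewrite -[x in LHS]/(id x) -E1 E2.
by move=> ->; apply: svalP.
Qed.

End Gen.

Local Close Scope ring_scope.

Section Enum.
Context {d : Order.disp_t} {Y : orderType d}.
Implicit Types (A w : seq Y).

Fixpoint arr A (j : nat) : seq (seq Y) :=
  match j with
  | 0 => [:: [::]]
  | j'.+1 => [seq x :: w | x <- A, w <- arr (rem x A) j']
  end.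

Lemma mem_arr j A w : uniq A ->
  (w \in arr A j) = [&& uniq w, size w == j & all (mem A) w].
Proof.
elim: j A w => [|j IH] A w UA /=.
  by case: w => [|y w]; rewrite inE //= andbF.
apply/allpairsPdep/idP.
  move=> [x [w' [xA w'A ->]]]; move: w'A; rewrite IH ?rem_uniq //.
  case/and3P => Uw' /eqP <- Aw'.
  have xw' : x \notin w'.
    apply/negP => xw; have : x \in rem x A := allP Aw' x xw.
    by rewrite (mem_rem_uniq _ UA) inE eqxx.
  rewrite /= xw' Uw' eqxx xA /=; apply/allP => y yw.
  have : y \in rem x A := allP Aw' y yw.
  by rewrite (mem_rem_uniq _ UA) => /andP[].
case: w => [|x w] //= /and3P[/andP[xw Uw] /eqP[sz] /andP[xA Aw]].
exists x, w; split => //; rewrite IH ?rem_uniq // Uw sz eqxx /=.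
apply/allP => y yw; have yA : y \in A := allP Aw y yw.
rewrite /= (mem_rem_uniq _ UA) inE yA andbT.
by apply: contraNneq xw => <-.
Qed.

Lemma uniq_arr j A : uniq A -> uniq (arr A j).
Proof.
elim: j A => [|j IH] A UA //=.
apply: allpairs_uniq_dep => //.
  by move=> x _; apply/IH/rem_uniq.
by move=> [x1 w1] [x2 w2] _ _ /= [-> ->].
Qed.

Lemma size_arr j A : uniq A -> size (arr A j) = (size A ^_ j)%N.
Proof.
elim: j A => [|j IH] A UA //=.
rewrite size_allpairs_dep ffactnS.
have -> : [seq size (arr (rem x A) j) | x <- A] = [seq ((size A).-1 ^_ j)%N | x <- A].
  by apply/eq_in_map => x xA; rewrite IH ?rem_uniq // size_rem.
have sumc (s : seq Y) c : sumn [seq c | _ <- s] = (size s * c)%N.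
  by elim: s => //= _ s ->; rewrite mulSn.
by rewrite sumc.
Qed.

Fixpoint LW A (k : nat) : seq (seq Y) :=
  match A with
  | [::] => [::]
  | x :: A' => [seq x :: w | w <- arr A' k.-1] ++ LW A' k
  end.

Lemma mem_LW A k w : (0 < k)%N -> sorted <%O A ->
  (w \in LW A k) = [&& uniq w, size w == k, all (mem A) w & lyndon w].
Proof.
move=> k0; elim: A w => [|x A IH] w /= SA.
  by case: w => [|y w] //=; rewrite ?andbF.
have SA' : sorted <%O A := path_sorted SA.
have UA : uniq A by apply: lt_sorted_uniq.
have xA : all (fun y => (x < y)%O) A by apply: order_path_min SA; apply: lt_trans.
have xnA : x \notin A.
  by apply/negP => /(allP xA); rewrite ltxx.
rewrite mem_cat IH //.
apply/idP/idP.
  case/orP.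
    case/mapP => w' w'A ->; move: w'A; rewrite mem_arr // => /and3P[Uw' /eqP sz Aw'].
    have xw' : x \notin w' by apply: contra xnA => /(allP Aw').
    rewrite /= xw' Uw' sz prednK // eqxx inE eqxx /=.
    apply/andP; split.
      apply/allP => y yw; have yA : y \in A := allP Aw' y yw.
      suff : y \in x :: A by [].
      by rewrite inE yA orbT.
    rewrite lyndon_uniq /= ?xw' ?Uw' //; apply/allP => y yw.
    have yA : y \in A := allP Aw' y yw; exact: (allP xA y yA).
  case/and4P => -> -> Aw ->; rewrite andbT /=.
  apply/allP => y yw; have yA : y \in A := allP Aw y yw.
  suff : y \in x :: A by [].
  by rewrite inE yA orbT.
case: w => [|b r]; first by rewrite /= andbF.
move=> /and4P[Ub sz Ab Lb].
have br : all (fun y => (b < y)%O) r by rewrite -lyndon_uniq.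
case: (b =P x) => [bx|/eqP bx].
  apply/orP; left; apply/mapP; exists r; last by rewrite bx.
  move: Ub Ab sz; rewrite bx /= => /andP[xr Ur] /andP[_ Ar] sz.
  rewrite mem_arr // Ur -(eqn_add2r 1) !addn1 prednK // sz /=.
  apply/allP => y yr; move: (allP Ar y yr); rewrite inE => /orP[/eqP yx|//].
  by move: xr; rewrite -yx yr.
apply/orP; right.
have bA : b \in A by move: Ab => /= /andP[]; rewrite inE (negbTE bx).
rewrite Ub sz Lb andbT /= bA /=.
apply/allP => y yr; suff : y \in A by [].
move: Ab => /= /andP[_ /allP /(_ y yr)] => yxA.
have : y \in x :: A by [].
rewrite inE => /orP[/eqP yx|//].
move: (allP br y yr) (allP xA b bA); rewrite yx => h1 h2.
by move: (lt_trans h1 h2); rewrite ltxx.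
Qed.

Lemma uniq_LW A k : (0 < k)%N -> sorted <%O A -> uniq (LW A k).
Proof.
move=> k0; elim: A => [|x A IH] //= SA.
have SA' : sorted <%O A := path_sorted SA.
have UA : uniq A by apply: lt_sorted_uniq.
have xA : all (fun y => (x < y)%O) A by apply: order_path_min SA; apply: lt_trans.
rewrite cat_uniq IH // andbT map_inj_uniq ?uniq_arr //; last by move=> ? ? [].
apply/hasPn => w; rewrite mem_LW // => /and4P[_ _ Aw _].
apply/mapP => [[w' _ E]]; move: Aw; rewrite E /= => /andP[/(allP xA)].
by rewrite ltxx.
Qed.

Lemma size_LW A k : (0 < k)%N -> uniq A -> size (LW A k) = ((k.-1)`! * 'C(size A, k))%N.
Proof.
case: k => // k _; elim: A => [|x A IH] /=; first by rewrite bin0n muln0.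
move=> /andP[_ UA]; rewrite size_cat size_map size_arr // IH // binS mulnDr.
by rewrite -bin_ffact /=; nia.
Qed.

End Enum.

Local Open Scope ring_scope.


Lemma span_collapse' (L : zmodType) (I : eqType) (F : I -> L) (A : I -> Prop) x :
  SpanF F A x -> exists r c, [/\ uniq r, (forall j, j \in r -> A j) &
    x = \sum_(j <- r) F j *~ c j].
Proof.
move=> [s [Hs E]]; set r := undup (map snd s).
have H2 : SpanF F (fun j => j \in r) x.
  by exists s; split => // q qs; rewrite mem_undup; apply: map_f.
have [c Ec] := span_collapse H2 (undup_uniq _) (fun j h => h).
exists r, c; split => //; first exact: undup_uniq.
by move=> j; rewrite mem_undup => /mapP[q qs ->]; apply: Hs.
Qed.

Lemma span_sumT (L : zmodType) (I : eqType) (F : I -> L) (A : I -> Prop)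
  (J : Type) (r : seq J) (G : J -> L) :
  (forall j, SpanF F A (G j)) -> SpanF F A (\sum_(j <- r) G j).
Proof. by move=> H; apply: big_ind => //; [exact: span0|exact: spanD]. Qed.

Section Deg.
Context {Y : Type}.
Variables (L : zmodType) (br : L -> L -> L) (i : Y -> L) (k : nat).

Lemma deg0 : deg_part br i k 0.
Proof. by exists [::]; rewrite big_nil. Qed.

Lemma degD x y : deg_part br i k x -> deg_part br i k y -> deg_part br i k (x + y).
Proof. by move=> [s [Hs ->]] [t [Ht ->]]; exists (s ++ t); rewrite all_cat Hs Ht big_cat. Qed.

Lemma degZ x c : deg_part br i k x -> deg_part br i k (x *~ c).
Proof.
move=> [s [Hs ->]]; exists [seq (q.1 * c, q.2) | q <- s]; split.
  by rewrite all_map.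
by rewrite big_map mulrz_suml; apply: eq_bigr => q _; rewrite mulrzA.
Qed.

Lemma deg_tree t : bt_len t = k -> deg_part br i k (bt_eval br i t).
Proof. by move=> tk; exists [:: (1, t)]; rewrite big_seq1 mulr1z /= tk eqxx. Qed.

End Deg.


Unset Implicit Arguments. Set Strict Implicit. Set Printing Implicit Defensive.

Theorem proposition2p9 (d : Order.disp_t) (Y : orderType d) (L : zmodType)
  (br : L -> L -> L) (i : Y -> L) :
  is_RL br i ->
  is_Zbasis (lyndon_mon br i) (fun w : seq Y => lyndon w && uniq w) (fun _ => True)
  /\ (forall e : seq Y, uniq e -> (forall y, y \in e) ->
      forall k : nat, (1 <= k)%N ->
        free_of_rank (deg_part br i k) ((k.-1)`! * 'C(size e, k))%N).
Proof.
move=> [Hlie [Hrel Huniv]].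
have [g [[Hg Hgi] _]] := Huniv _ brM fM brM_lie brM_rel.
have span_all x : SpanF (lyndon_mon br i) (fun w => lyndon w && uniq w) x.
  have [s ->] := generation Hlie Hrel Huniv x.
  apply: span_sumT => q; apply: spanZ.
  apply: span_mono (tree_span Hlie Hrel Hg Hgi q.2) => w [_ [Lw Uw]].
  by rewrite Lw Uw.
split.
  split.
    move=> s c Us As H0 j js.
    apply: (indep_gen Hg Hgi (phi := id) Us _ _ H0 js) => //.
    by move=> j' j's; apply: (allP As).
  move=> x; split => // _.
  have [r [c [Ur Ar E]]] := span_collapse' (span_all x).
  by exists r, c; split => //; apply/allP => j /Ar.
move=> e Ue He k k0.
set A := sort <=%O e.
have SA : sorted <%O A by rewrite sort_lt_sorted.
have pA : perm_eq A e by rewrite perm_sort perm_refl.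
have AY y : y \in A by rewrite (perm_mem pA).
set ws := LW A k.
have Uws : uniq ws := uniq_LW k0 SA.
have memws w : (w \in ws) = [&& lyndon w, uniq w & size w == k].
  rewrite mem_LW //.
  have -> : all (mem A) w by apply/allP => y _; exact: AY.
  by case: (lyndon w); case: (uniq w); case: (size w == k).
have sz : size ws = ((k.-1)`! * 'C(size e, k))%N.
  by rewrite size_LW // ?(perm_size pA) // (lt_sorted_uniq SA).
rewrite -sz.
exists (fun j : 'I_(size ws) => lyndon_mon br i (nth [::] ws j)).
split.
  move=> s c Us _ H0 j js.
  apply: (indep_gen Hg Hgi (phi := fun j : 'I_(size ws) => nth [::] ws j) Us _ _ H0 js).
    move=> j1 j2 _ _ /= E; apply: val_inj; apply/eqP.
    by rewrite -(nth_uniq [::] (ltn_ord j1) (ltn_ord j2) Uws) E.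
  move=> j' _; have := mem_nth [::] (ltn_ord j'); rewrite memws.
  by case/and3P => -> ->.
move=> x; split.
  move=> [s [Hs ->]].
  have HS : SpanF (lyndon_mon br i) (fun w => w \in ws)
      (\sum_(q <- s) bt_eval br i q.2 *~ q.1).
    elim: s Hs => [|q s IH] /=; first by move=> _; rewrite big_nil; exact: span0.
    case/andP => /eqP qk Hs; rewrite big_cons; apply: spanD; last exact: IH.
    apply: spanZ.
    apply: span_mono (tree_span Hlie Hrel Hg Hgi q.2) => w [Pw [Lw Uw]].
    by rewrite memws Lw Uw (perm_size Pw) -bt_len_leaves qk eqxx.
  have HS' : SpanF (fun j : 'I_(size ws) => lyndon_mon br i (nth [::] ws j)) (fun _ => True)
      (\sum_(q <- s) bt_eval br i q.2 *~ q.1).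
    apply: span_reindex HS _ => w wws.
    have iw : (index w ws < size ws)%N by rewrite index_mem.
    by exists (Ordinal iw); rewrite /= nth_index.
  have [r [c [_ _ E]]] := span_collapse' HS'.
  by exists r, c; split => //; apply/allP.
move=> [s [c [_ ->]]].
apply: big_ind; [exact: deg0|exact: degD|] => j _.
apply: degZ.
have := mem_nth [::] (ltn_ord j); rewrite memws => /and3P[Lw Uw /eqP sw].
have [t [Et Lt]] := lyndon_tree br i (w := nth [::] ws j) (ltac:(by rewrite sw)).
by rewrite -Et; apply: deg_tree; rewrite bt_len_leaves Lt.
Qed.
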